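(* Let $A\in\mathbb{R}^{m\times m}$ be positive definite, $B\in\mathbb{R}^{m\times n}$ ($n\le m$), $\alpha\ge0$, $\beta>0$. Then every eigenvalue $\lambda$ of $\mathcal{P}_{MGSSP}^{-1}\mathcal{A}$ satisfies $|\lambda-\tfrac12|\le\tfrac12$. If moreover $B$ has full column rank, then every eigenvalue of $\mathcal{P}_{MGSSP}^{-1}\mathcal{A}$ has positive real part.
   Context: A real square matrix $A$ is called positive definite if $x^TAx>0$ for all nonzero $x\in\mathbb{R}^m$ ($A$ need not be symmetric). $\mathcal{A}=\begin{pmatrix}A & B\\ -B^T & 0\end{pmatrix}$ and, for $\alpha\ge0,\beta>0$, $\mathcal{P}_{MGSSP}=\begin{pmatrix}\alpha I+2A & 2B\\ -2B^T & \beta I\end{pmatrix}$ (which is nonsingular). *)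

(* Defs.v *)
(* Complex numbers: an arbitrary numClosedFieldType C (e.g. C = complex
   numbers); real numbers/matrices are those with entries in Num.real. *)
From HB Require Import structures.
From mathcomp Require Import all_boot all_order all_algebra.
Set Implicit Arguments. Unset Strict Implicit. Unset Printing Implicit Defensive.
Import Order.TTheory GRing.Theory Num.Theory.
Local Open Scope ring_scope.

(* real positive definite (not necessarily symmetric): x^T A x > 0 for all real x <> 0 *)
Definition posdef (C : numClosedFieldType) (m : nat) (A : 'M[C]_m) : Prop :=
  forall x : 'cV[C]_m, x \is a mxOver Num.real -> x != 0 -> 0 < (x^T *m A *m x) 0 0.

Definition saddleA (C : numClosedFieldType) (m n : nat)
  (A : 'M[C]_m) (B : 'M[C]_(m, n)) : 'M[C]_(m + n) :=
  block_mx A B (- B^T) 0.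

Definition P_MGSSP (C : numClosedFieldType) (m n : nat)
  (A : 'M[C]_m) (B : 'M[C]_(m, n)) (alpha beta : C) : 'M[C]_(m + n) :=
  block_mx (alpha%:M + 2%:R *: A) (2%:R *: B) (- (2%:R *: B^T)) (beta%:M).

(* Main.v *)
From HB Require Import structures.
From mathcomp Require Import all_boot all_order all_algebra.
From mathcomp Require Import ring.
Set Implicit Arguments. Unset Strict Implicit. Unset Printing Implicit Defensive.
Import Order.TTheory GRing.Theory Num.Theory Num.Def.
Local Open Scope ring_scope.
Require Import Defs.
Definition cj (C : numClosedFieldType) k (v : 'rV[C]_k) : 'cV[C]_k :=
  map_mx conjC v^T.
Lemma trR (C : numClosedFieldType) p q (M : 'M[C]_(p,q)) :
  M \is a mxOver Num.real -> M^T \is a mxOver Num.real.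
Proof. by move=> /mxOverP H; apply/mxOverP=> i j; rewrite mxE. Qed.
Lemma pd_ge0 (C : numClosedFieldType) k (A : 'M[C]_k) (r : 'rV[C]_k) :
  posdef A -> r \is a mxOver Num.real ->
  0 <= (r *m A *m r^T) 0 0 /\ (r != 0 -> 0 < (r *m A *m r^T) 0 0).
Proof.
move=> pA rR.
have H : r != 0 -> 0 < (r *m A *m r^T) 0 0.
  move=> rn; have := pA r^T (trR rR); rewrite trmxK; apply.
  by apply: contra rn => /eqP /(congr1 trmx); rewrite trmxK trmx0 => ->.
split=> //; have [->|/H/ltW//] := eqVneq r 0.
by rewrite !mul0mx mxE.
Qed.
Lemma fm_pos (C : numClosedFieldType) k (A : 'M[C]_k) (x : 'rV[C]_k) :
  A \is a mxOver Num.real -> posdef A ->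
  let q := (x *m A *m cj x) 0 0 in 0 <= q + q^* /\ (x != 0 -> 0 < q + q^*).
Proof.
move=> AR pA q.
set r := map_mx (fun z => 'Re z) x; set s := map_mx (fun z => 'Im z) x.
have rR : r \is a mxOver Num.real by apply/mxOverP=> i j; rewrite mxE Creal_Re.
have sR : s \is a mxOver Num.real by apply/mxOverP=> i j; rewrite mxE Creal_Im.
have hx : x = r + 'i *: s by apply/matrixP=> i j; rewrite !mxE -Crect.
have hc : cj x = r^T - 'i *: s^T.
  apply/matrixP=> i j; rewrite !mxE.
  by rewrite [in LHS](Crect (x j i)) conjC_rect ?Creal_Re ?Creal_Im.
have Er : forall u v : 'rV_k, u \is a mxOver Num.real -> v \is a mxOver Num.real ->
   (u *m A *m v^T) 0 0 \is Num.real.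
  move=> u v uR vR; have /mxOverP := mxOverM (mxOverM uR AR) (trR vR); exact.
have qE : q = ((r *m A *m r^T) 0 0 + (s *m A *m s^T) 0 0) +
      'i * ((s *m A *m r^T) 0 0 - (r *m A *m s^T) 0 0).
  rewrite /q hc; rewrite [in LHS]hx.
  rewrite !(mulmxDl, mulmxBr, mulmxDr) !mulmxN -!scalemxAl -!scalemxAr scalerA.
  set u1 := r *m A *m r^T; set u2 := r *m A *m s^T.
  set u3 := s *m A *m r^T; set u4 := s *m A *m s^T.
  rewrite !mxE -expr2 sqrCi; ring.
rewrite qE.
have R1 := Er _ _ rR rR; have R2 := Er _ _ rR sR; have R3 := Er _ _ sR rR.
have R4 := Er _ _ sR sR.
have [p1 p1'] := pd_ge0 pA rR; have [p4 p4'] := pd_ge0 pA sR.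
move: R1 R2 R3 R4 p1 p1' p4 p4'.
set a1 := (r *m A *m r^T) 0 0; set a2 := (r *m A *m s^T) 0 0.
set a3 := (s *m A *m r^T) 0 0; set a4 := (s *m A *m s^T) 0 0.
move=> R1 R2 R3 R4 p1 p1' p4 p4'.
rewrite rmorphD rmorphM rmorphB rmorphD /= conjCi (conj_Creal R1) (conj_Creal R2).
rewrite (conj_Creal R3) (conj_Creal R4).
have -> : a1 + a4 + 'i * (a3 - a2) + (a1 + a4 + - 'i * (a3 - a2)) = (a1 + a4) *+ 2.
  by ring.
split; first by rewrite mulrn_wge0 // addr_ge0.
move=> xn; rewrite pmulrn_lgt0 //.
have : (r != 0) || (s != 0).
  apply: contraR xn; rewrite negb_or !negbK => /andP[/eqP r0 /eqP s0].
  by rewrite hx r0 s0 scaler0 addr0.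
case/orP=> [/p1' h|/p4' h]; first by rewrite ltr_pwDl.
by rewrite ltr_pwDr.
Qed.
Lemma map_real (C : numClosedFieldType) p q (M : 'M[C]_(p,q)) :
  M \is a mxOver Num.real -> map_mx conjC M = M.
Proof.
move=> /mxOverP HM; apply/matrixP=> i j; rewrite mxE; exact: conj_Creal.
Qed.
Lemma tr11 (C : numClosedFieldType) (N : 'M[C]_1) : N 0 0 = N^T 0 0.
Proof. by rewrite mxE. Qed.
Lemma conj_fm (C : numClosedFieldType) p q (u : 'rV[C]_p) (M : 'M_(p,q)) (v : 'rV_q) :
  M \is a mxOver Num.real ->
  ((u *m M *m cj v) 0 0)^* = (v *m M^T *m cj u) 0 0.
Proof.
move=> HM.
have -> : ((u *m M *m cj v) 0 0)^* = (map_mx conjC (u *m M *m cj v)) 0 0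
  by rewrite [RHS]mxE.
rewrite !map_mxM (map_real HM) /cj.
have -> : map_mx conjC (map_mx conjC v^T) = v^T.
  by apply/matrixP=> i j; rewrite !mxE conjCK.
by rewrite tr11 !trmx_mul trmxK mulmxA map_trmx.
Qed.
Lemma dot_ge0 (C : numClosedFieldType) k (y : 'rV[C]_k) : 0 <= (y *m cj y) 0 0.
Proof.
have [->|/dotmx_is_dotmx] := eqVneq y 0; first by rewrite mul0mx mxE.
by rewrite dotmxE => /ltW.
Qed.
Lemma dot_eq0 (C : numClosedFieldType) k (y : 'rV[C]_k) : (y *m cj y) 0 0 = 0 -> y = 0.
Proof.
have [//|/dotmx_is_dotmx] := eqVneq y 0.
by rewrite dotmxE => /gt_eqF/eqP.
Qed.
Lemma conj2 (C : numClosedFieldType) : (2%:R : C)^* = 2%:R.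
Proof. exact: (rmorph_nat conjC 2). Qed.

Lemma scalar_main (C : numClosedFieldType) (a b b' c d al be l : C) :
  0 <= al -> 0 < be -> 0 <= c -> 0 <= d -> b'^* = b -> 0 <= a + a^* ->
  a - b = l * (al * c + 2%:R * a - 2%:R * b) ->
  b' = l * (2%:R * b' + be * d) ->
  (d = 0 -> 0 < a + a^*) ->
  0 <= l + l^* - 4%:R * l * l^*.
Proof.
move=> al0 be0 c0 d0 hb apos F1 F2 hd.
have cal : al^* = al by apply/conj_Creal/ger0_real.
have cbe : be^* = be by apply/conj_Creal/ger0_real/ltW.
have cc : c^* = c by apply/conj_Creal/ger0_real.
have cd : d^* = d by apply/conj_Creal/ger0_real.
have hb' : b^* = b' by rewrite -hb conjCK.
have cF1 : a^* - b' = l^* * (al * c + 2%:R * a^* - 2%:R * b').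
  have := congr1 conjC F1; rewrite !(rmorphB, rmorphD, rmorphM, rmorph1) /= hb' cal cc.
  by move=> ->; ring.
have cF2 : b = l^* * (2%:R * b + be * d).
  have := congr1 conjC F2; rewrite !(rmorphB, rmorphD, rmorphM, rmorph1) /= hb cbe cd.
  by move=> E; rewrite {1}E; ring.
set g := l + l^* - 4%:R * l * l^*.
have key : (a + a^*) * ((1 - 2%:R * l) * (1 - 2%:R * l^*)) - g * (al * c + be * d) =
   (1 - 2%:R * l^*) * ((a - b) - l * (al * c + 2%:R * a - 2%:R * b))
 + (1 - 2%:R * l) * (b - l^* * (2%:R * b + be * d))
 + (1 - 2%:R * l) * ((a^* - b') - l^* * (al * c + 2%:R * a^* - 2%:R * b'))
 + (1 - 2%:R * l^*) * (b' - l * (2%:R * b' + be * d)).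
  rewrite /g; ring.
move: key; rewrite -F1 -cF2 -cF1 -F2 !subrr !mulr0 !addr0 => /eqP; rewrite subr_eq0 => /eqP key.
have N0 : 0 <= (1 - 2%:R * l) * (1 - 2%:R * l^*).
  have -> : 1 - 2%:R * l^* = (1 - 2%:R * l)^* by rewrite rmorphB rmorph1 rmorphM /= conj2.
  exact: mul_conjC_ge0.
have s0 : 0 <= al * c + be * d by rewrite addr_ge0 // mulr_ge0 // ltW.
have [s00|spos] := eqVneq (al * c + be * d) 0; last first.
  have spos' : 0 < al * c + be * d by rewrite lt_def spos s0.
  by rewrite -(pmulr_lge0 _ spos') -key mulr_ge0.
move: key; rewrite s00 mulr0 => key.
move/eqP: s00; rewrite (paddr_eq0 (mulr_ge0 al0 c0) (mulr_ge0 (ltW be0) d0)) => /andP[_].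
rewrite mulf_eq0 (gt_eqF be0) /= => /eqP /hd ap.
move/eqP: key; rewrite mulf_eq0 (gt_eqF ap) /= mulf_eq0 !subr_eq0 => /orP[] /eqP h.
  have h' : 2%:R * l^* = 1 by have := congr1 conjC h; rewrite rmorphM rmorph1 /= conj2.
  have : g * 2%:R = 0.
    have -> : g * 2%:R = 2%:R * l + 2%:R * l^* - 2%:R * ((2%:R * l) * (2%:R * l^*)) by rewrite /g; ring.
    by rewrite -h h'; ring.
  by move/eqP; rewrite mulf_eq0 pnatr_eq0 orbF => /eqP ->.
have h' : 2%:R * l = 1 by have := congr1 conjC h; rewrite rmorphM rmorph1 /= conj2 conjCK.
have : g * 2%:R = 0.
  have -> : g * 2%:R = 2%:R * l + 2%:R * l^* - 2%:R * ((2%:R * l) * (2%:R * l^*)) by rewrite /g; ring.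
  by rewrite -h h'; ring.
by move/eqP; rewrite mulf_eq0 pnatr_eq0 orbF => /eqP ->.
Qed.
Lemma e_add (C : numClosedFieldType) (M N : 'M[C]_1) : (M + N) 0 0 = M 0 0 + N 0 0.
Proof. by rewrite mxE. Qed.
Lemma e_opp (C : numClosedFieldType) (M : 'M[C]_1) : (- M) 0 0 = - M 0 0.
Proof. by rewrite mxE. Qed.
Lemma e_scale (C : numClosedFieldType) (k : C) (M : 'M[C]_1) : (k *: M) 0 0 = k * M 0 0.
Proof. by rewrite mxE. Qed.
Lemma e_zero (C : numClosedFieldType) : (0 : 'M[C]_1) 0 0 = 0.
Proof. by rewrite mxE. Qed.

Section Proj.
Lemma proj11 (C : numClosedFieldType) m n (A : 'M[C]_m) (B : 'M[C]_(m,n)) x y :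
  ((x *m A + y *m - B^T) *m cj x) 0 0 =
  (x *m A *m cj x) 0 0 - (y *m B^T *m cj x) 0 0.
Proof. by rewrite mulmxN mulmxDl mulNmx e_add e_opp. Qed.
Lemma proj12 (C : numClosedFieldType) m n (A : 'M[C]_m) (B : 'M[C]_(m,n)) al x y :
  ((x *m (al%:M + 2%:R *: A) + y *m - (2%:R *: B^T)) *m cj x) 0 0 =
  al * (x *m cj x) 0 0 + 2%:R * (x *m A *m cj x) 0 0 - 2%:R * (y *m B^T *m cj x) 0 0.
Proof.
rewrite mulmxN mulmxDr mul_mx_scalar -!scalemxAr !mulmxDl mulNmx -!scalemxAl.
by rewrite !e_add e_opp !e_scale.
Qed.
Lemma proj21 (C : numClosedFieldType) m n (B : 'M[C]_(m,n)) x (y : 'rV_n) :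
  ((x *m B + y *m 0) *m cj y) 0 0 = (x *m B *m cj y) 0 0.
Proof. by rewrite mulmx0 addr0. Qed.
Lemma proj22 (C : numClosedFieldType) m n (B : 'M[C]_(m,n)) be x (y : 'rV_n) :
  ((x *m (2%:R *: B) + y *m be%:M) *m cj y) 0 0 =
  2%:R * (x *m B *m cj y) 0 0 + be * (y *m cj y) 0 0.
Proof.
rewrite mul_mx_scalar -!scalemxAr !mulmxDl -!scalemxAl.
by rewrite !e_add !e_scale.
Qed.
End Proj.
Lemma null_scalar (C : numClosedFieldType) (a b b' c d al be : C) :
  0 <= al -> 0 < be -> 0 <= c -> 0 <= d -> b'^* = b -> 0 <= a + a^* ->
  al * c + 2%:R * a - 2%:R * b = 0 -> 2%:R * b' + be * d = 0 ->
  a + a^* = 0 /\ d = 0.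
Proof.
move=> al0 be0 c0 d0 hb apos g1 g2.
have cal : al^* = al by apply/conj_Creal/ger0_real.
have cbe : be^* = be by apply/conj_Creal/ger0_real/ltW.
have cc : c^* = c by apply/conj_Creal/ger0_real.
have cd : d^* = d by apply/conj_Creal/ger0_real.
have hb' : b^* = b' by rewrite -hb conjCK.
have cg1 : al * c + 2%:R * a^* - 2%:R * b' = 0.
  have := congr1 conjC g1; rewrite !(rmorphB, rmorphD, rmorphM, rmorph1, rmorph0) /= hb' cal cc.
  by move=> E; rewrite -E; ring.
have cg2 : 2%:R * b + be * d = 0.
  have := congr1 conjC g2; rewrite !(rmorphB, rmorphD, rmorphM, rmorph1, rmorph0) /= hb cbe cd.
  by move=> E; rewrite -E; ring.
have key : 2%:R * (al * c + (a + a^*) + be * d) =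
  (al * c + 2%:R * a - 2%:R * b) + (al * c + 2%:R * a^* - 2%:R * b') +
  (2%:R * b' + be * d) + (2%:R * b + be * d) by ring.
move: key; rewrite g1 g2 cg1 cg2 !addr0 => /eqP; rewrite mulf_eq0 pnatr_eq0 /=.
have h1 : 0 <= al * c by rewrite mulr_ge0.
have h2 : 0 <= be * d by rewrite mulr_ge0 // ltW.
rewrite (paddr_eq0 (addr_ge0 h1 apos) h2) (paddr_eq0 h1 apos).
case/andP=> /andP[_ /eqP ->]; rewrite mulf_eq0 (gt_eqF be0) /= => /eqP ->.
by [].
Qed.

Theorem mainTheorem9 (C : numClosedFieldType) (m n : nat)
  (A : 'M[C]_m) (B : 'M[C]_(m, n)) (alpha beta : C) :
  A \is a mxOver Num.real -> B \is a mxOver Num.real ->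
  posdef A -> (n <= m)%N -> 0 <= alpha -> 0 < beta ->
  (forall lambda : C,
     eigenvalue (invmx (P_MGSSP A B alpha beta) *m saddleA A B) lambda ->
     `|lambda - 2%:R^-1| <= 2%:R^-1) /\
  (\rank B = n ->
   forall lambda : C,
     eigenvalue (invmx (P_MGSSP A B alpha beta) *m saddleA A B) lambda ->
     0 < 'Re lambda).
Proof.
move=> AR BR pA _ al0 be0.
have BTR := trR BR.
set P := P_MGSSP A B alpha beta.
set Aa := saddleA A B.
have Pu : P \in unitmx.
  rewrite -row_free_unit; apply: inj_row_free => w.
  rewrite -[w]hsubmxK /P /P_MGSSP mul_row_block -row_mx0 => /eq_row_mx [G1 G2].
  move: G1 G2; set x := lsubmx w; set y := rsubmx w => G1 G2.
  have := congr1 (fun M => (M *m cj x) 0 0) G1; rewrite /= proj12 mul0mx e_zero => g1.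
  have := congr1 (fun M => (M *m cj y) 0 0) G2; rewrite /= proj22 mul0mx e_zero => g2.
  have [ap an] := fm_pos x AR pA.
  have [h1 h2] := null_scalar al0 be0 (dot_ge0 x) (dot_ge0 y) (conj_fm x y BR) ap g1 g2.
  have y0 : y = 0 := dot_eq0 h2.
  have x0 : x = 0.
    by have [//|/an] := eqVneq x 0; rewrite h1 ltxx.
  by rewrite x0 y0 row_mx0.
have main : forall l, eigenvalue (invmx P *m Aa) l ->
   0 <= l + l^* - 4%:R * l * l^* /\ (\rank B = n -> l != 0).
  move=> l /eigenvalueP [v hv vn].
  set w := v *m invmx P.
  have hw : w *m Aa = l *: (w *m P) by rewrite /w -mulmxA hv mulmxKV.
  have wn : w != 0.
    by apply: contraNneq vn => w0; rewrite -(mulmxKV Pu v) -/w w0 mul0mx.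
  move: hw wn; rewrite -[w]hsubmxK /Aa /saddleA /P /P_MGSSP !mul_row_block scale_row_mx.
  move=> /eq_row_mx [Q1 Q2] wn; move: Q1 Q2 wn; set x := lsubmx w; set y := rsubmx w => Q1 Q2 wn.
  have := congr1 (fun M => (M *m cj x) 0 0) Q1.
  rewrite /= -scalemxAl e_scale proj11 proj12 => E1.
  have := congr1 (fun M => (M *m cj y) 0 0) Q2.
  rewrite /= -scalemxAl e_scale proj21 proj22 => E2.
  have [ap an] := fm_pos x AR pA.
  have hd : (y *m cj y) 0 0 = 0 -> 0 < (x *m A *m cj x) 0 0 + ((x *m A *m cj x) 0 0)^*.
    move=> /dot_eq0 y0; apply: an; apply: contraNneq wn => x0.
    by rewrite x0 y0 row_mx0.
  split; first exact: scalar_main al0 be0 (dot_ge0 x) (dot_ge0 y) (conj_fm x y BR) ap E1 E2 hd.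
  move=> rB; apply/eqP => l0.
  move: E1 E2 Q1; rewrite l0 !mul0r scale0r => E1 E2 Q1.
  have hb := conj_fm x y BR; rewrite E2 rmorph0 in hb.
  move: E1; rewrite -hb subr0 => a0.
  have x0 : x = 0.
    by apply/eqP; apply: contraTT ap => /an; rewrite a0 rmorph0 addr0 ltxx.
  move: Q1; rewrite x0 mul0mx add0r mulmxN => /eqP; rewrite oppr_eq0 => /eqP yB.
  have rf : row_free B^T by rewrite /row_free mxrank_tr rB.
  have y0 : y = 0 by apply: (row_free_inj rf); rewrite yB mul0mx.
  by move: wn; rewrite x0 y0 row_mx0 eqxx.
have c2i : (2%:R^-1 : C)^* = 2%:R^-1.
  by rewrite conj_Creal // ger0_real // invr_ge0 ler0n.
split.
  move=> l /main [g0 _].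
  rewrite -ler_sqr ?nnegrE ?normr_ge0 ?invr_ge0 ?ler0n // normCK rmorphB /= c2i.
  rewrite -subr_ge0.
  have -> : 2%:R^-1 ^+ 2 - (l - 2%:R^-1) * (l^* - 2%:R^-1) =
     (l + l^* - 4%:R * l * l^*) / 2%:R + l * l^* by field.
  by rewrite addr_ge0 ?divr_ge0 ?ler0n ?mul_conjC_ge0.
move=> rB l /main [g0 /(_ rB) l0].
rewrite ReE divr_gt0 ?ltr0n //.
have -> : l + l^* = (l + l^* - 4%:R * l * l^*) + 4%:R * (l * l^*) by ring.
by rewrite ltr_wpDl // mulr_gt0 ?ltr0n ?mul_conjC_gt0.
Qed.
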